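(* Let $\theta>\kappa>0$ and $\eta_t=1/(\kappa t+2\theta)$. Let $p\in\mathcal X$ be fixed. Let $(\pi^t)_{t\ge0}$ be $\mathcal X$-valued random variables adapted to a filtration $(\mathcal F_t)_{t\ge0}$, i.e. $\pi^t$ is $\mathcal F_t$-measurable. Let $\xi_i^t\in\mathbb R^{d_i}$ be random vectors with $\mathbb E[\xi_i^t\mid\mathcal F_t]=0$ and $\mathbb E[\|\xi_i^t\|^2\mid\mathcal F_t]\le C^2$ for all $i\in[N]$ and $t\ge0$. Suppose that for all $t\ge0$, almost surely, $$D_\psi(p,\pi^{t+1})-D_\psi(p,\pi^t)+D_\psi(\pi^{t+1},\pi^t)\le\eta_t\big(\theta D_\psi(\pi^{t+1},\pi^t)-\kappa D_\psi(p,\pi^t)\big)+\eta_t\sum_{i=1}^N\langle\xi_i^t,\pi_i^{t+1}-p_i\rangle.$$ Then for all $t\ge0$, $$\mathbb E[D_\psi(p,\pi^{t+1})]\le\frac{2\theta-\kappa}{\kappa t+2\theta}D_\psi(p,\pi^0)+\frac{NC^2}{\rho(\kappa t+2\theta)}\Big(\frac1\kappa\log\Big(\frac\kappa{2\theta}t+1\Big)+\frac1{2\theta}\Big).$$ (In the paper, $p=\pi^{\mu,\sigma}$.)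
   Context: For each $i\in[N]$, $\mathcal X_i\subseteq\mathbb R^{d_i}$ is a nonempty compact convex set, and $\mathcal X=\prod_i\mathcal X_i$. The norm is Euclidean, with $\|\pi\|^2=\sum_i\|\pi_i\|^2$. Regularizer. $\psi:\mathcal X_i\to\mathbb R$ is differentiable and $\rho$-strongly convex with respect to $\|\cdot\|$ ($\rho>0$). Bregman divergence: $D_\psi(x,y)=\psi(x)-\psi(y)-\langle\nabla\psi(y),x-y\rangle$, and $D_\psi(\pi,\pi')=\sum_iD_\psi(\pi_i,\pi_i')$. Here $\pi^0$ is deterministic. *)

(* Defs.v *)
From HB Require Import structures.
From mathcomp Require Import all_boot all_order all_algebra.
From mathcomp Require Import all_classical all_reals all_analysis.
Set Implicit Arguments. Unset Strict Implicit. Unset Printing Implicit Defensive.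
Import Order.TTheory GRing.Theory Num.Theory.
Import numFieldNormedType.Exports.
Local Open Scope classical_set_scope.
Local Open Scope ring_scope.

Definition einner (R : realType) (n : nat) (x y : 'rV[R]_n) : R :=
  \sum_(j < n) x ord0 j * y ord0 j.
Definition enorm (R : realType) (n : nat) (x : 'rV[R]_n) : R :=
  Num.sqrt (einner x x).

Definition strongly_convex_on (R : realType) (n : nat) (S : set 'rV[R]_n)
    (f : 'rV[R]_n -> R) (rho : R) : Prop :=
  forall x y l, S x -> S y -> 0 <= l <= 1 ->
    f (l *: x + (1 - l) *: y) <=
      l * f x + (1 - l) * f y - rho / 2 * l * (1 - l) * enorm (x - y) ^+ 2.

(* Bregman divergence D_psi(x,y) = psi x - psi y - <grad psi(y), x - y>,
   where <grad psi(y), v> is the (Frechet) differential 'd psi y applied to v. *)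
Definition bregman (R : realType) (n : nat) (psi : 'rV[R]_n -> R)
    (x y : 'rV[R]_n) : R :=
  psi x - psi y - ('d psi y : 'rV[R]_n -> R) (x - y).

Definition bregmanP (R : realType) (N : nat) (dim : 'I_N -> nat)
    (psi : forall i, 'rV[R]_(dim i) -> R)
    (x y : forall i, 'rV[R]_(dim i)) : R :=
  \sum_(i < N) bregman (psi i) (x i) (y i).

Definition measurable_wrt (d : measure_display) (T : measurableType d)
    (R : realType) (G : set (set T)) (f : T -> R) : Prop :=
  forall B : set R, measurable B -> G (f @^-1` B).

(* Main.v *)
Require Import Defs.
From HB Require Import structures.
From mathcomp Require Import all_boot all_order all_algebra.
From mathcomp Require Import all_classical all_reals all_analysis.
Import Order.TTheory GRing.Theory Num.Theory.
Import numFieldNormedType.Exports.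
Local Open Scope classical_set_scope.
Local Open Scope ring_scope.
From mathcomp Require Import ring lra.
Lemma right_punct (R : realType) (A : set R) : 0^' A -> 0^'+ A.
Proof.
rewrite /at_right /dnbhs /within /=; apply: filterS => x Hx x0; apply: Hx.
by rewrite gt_eqF.
Qed.

Lemma bregman_lb (R : realType) n (S : set 'rV[R]_n) (f : 'rV[R]_n -> R) rho x y :
  strongly_convex_on S f rho -> S x -> S y -> differentiable f y ->
  rho / 2 * enorm (x - y) ^+ 2 <= bregman f x y.
Proof.
move=> sc Sx Sy df.
set v := x - y.
have hd : derivable f y v by apply: diff_derivable.
have c1 : (fun h : R => h^-1 *: ((f \o shift y) (h *: v) - f y)) @ 0^'+ --> 'd f y v.
  rewrite -deriveE //.
  move=> A HA; apply: right_punct; exact: hd _ HA.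
pose g := fun h : R => f x - f y - rho / 2 * enorm v ^+ 2 + rho / 2 * enorm v ^+ 2 * h.
have c2 : g @ 0^'+ --> f x - f y - rho / 2 * enorm v ^+ 2.
  have e0 : f x - f y - rho / 2 * enorm v ^+ 2 = g 0 by rewrite /g mulr0 addr0.
  rewrite e0; apply: cvg_at_right_filter; rewrite /g /=.
  apply: cvgD; first exact: cvg_cst.
  apply: cvgMr; exact: cvg_id.
have : 'd f y v <= f x - f y - rho / 2 * enorm v ^+ 2.
  apply: (ler_cvg_to c1 c2).
  near=> h.
  have h0 : 0 < h by near: h; exact: nbhs_right_gt.
  have h1 : h < 1 by near: h; exact: nbhs_right_lt.
  have e : h *: v + y = h *: x + (1 - h) *: y.
    by rewrite /v scalerBr scalerBl scale1r [y - _]addrC addrA.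
  have := sc x y h Sx Sy; rewrite (ltW h0) (ltW h1) => /(_ isT).
  rewrite -e /= => H.
  rewrite /g -(ler_pM2l h0) -[h * _]/(h *: _) scalerA mulfV ?gt_eqF // scale1r.
  rewrite /v; nra.
rewrite /bregman -/v; nra.
Unshelve. all: by end_near.
Qed.

Lemma bnd_of {T : Type} {R : realType} {h : T -> R} {M : R} :
  (forall x, `|h x| <= M) -> [bounded h x | x in setT].
Proof.
move=> H; rewrite /bounded_near; near=> M0 => x _ /=; rewrite (le_trans (H x)) //.
Unshelve. all: by end_near.
Qed.

Lemma sum_lt_nat (m j : nat) : (j <= m)%N ->
  (\sum_(k < m) ((k < j)%N : nat) = j)%N.
Proof.
elim: m => [|m IH] /=.
  by rewrite leqn0 => /eqP ->; rewrite big_ord0.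
rewrite big_ord_recr /= leq_eqVlt => /orP [/eqP ->|jm].
  rewrite ltnSn addn1.
  have -> : (\sum_(i < m) (i < m.+1)%N = m)%N.
    rewrite -[X in _ = X](card_ord m) -sum1_card.
    by apply: eq_bigr => i _; rewrite (ltn_trans (ltn_ord i)).
  by [].
by rewrite IH // ltnNge -ltnS jm /= addn0.
Qed.

Lemma zero_mean d (T : measurableType d) (R : realType) (P : probability T R)
  (G : set (set T)) (g f : T -> R) (M : R) :
  G `<=` measurable -> G setT ->
  measurable_fun setT g -> P.-integrable setT (EFin \o g) ->
  (forall A, G A -> (\int[P]_(w in A) (g w)%:E = 0)%E) ->
  measurable_wrt G f -> (forall w, `|f w| <= M) ->
  (\int[P]_w (g w * f w)%:E = 0)%E.
Proof.
move=> GM GT mg ig gA wf fM.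
have mf : measurable_fun setT f.
  by move=> _ B mB; rewrite setTI; exact: GM (wf B mB).
have igf : P.-integrable setT (fun w => (g w * f w)%:E).
  have := integrableMl measurableT ig mf (bnd_of fM).
  by apply: eq_integrable => // w _ /=; rewrite EFinM.
have iag : P.-integrable setT (fun w => (`|g w|)%:E) := integrable_norm ig.
set I := (\int[P]_w _)%E.
have Ifin : I \is a fin_num := integrable_fin_num measurableT igf.
set J := (\int[P]_w (`|g w|)%:E)%E.
have Jfin : J \is a fin_num := integrable_fin_num measurableT iag.
have J0 : 0 <= fine J by rewrite fine_ge0 // integral_ge0.
suff key : forall n : nat, `|fine I| <= fine J / n.+1%:R.
  rewrite -(fineK Ifin); congr (_%:E).
  apply/eqP; apply/negPn/negP => I0.
  have aI : 0 < `|fine I| by rewrite normr_gt0.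
  set n := Num.Def.trunc (fine J / `|fine I|).
  have : fine J / `|fine I| < n.+1%:R.
    by rewrite -truncn_le_nat.
  rewrite ltr_pdivrMr // -ltr_pdivrMl ?ltr0Sn // => H.
  by move: (key n) => /(lt_le_trans H); rewrite mulrC ltxx.
move=> n.
set K := (Num.Def.trunc M).+1.
have MK : M < K%:R by rewrite -truncn_le_nat.
set N1 : R := n.+1%:R.
have N10 : 0 < N1 by rewrite ltr0Sn.
set m := (K * 2 * n.+1)%N.
pose A (k : nat) := f @^-1` [set` `[(k.+1%:R / N1 - K%:R), +oo[%R].
have GA : forall k, G (A k) by move=> k; apply: wf; exact: measurable_itv.
pose h w := - K%:R + \sum_(k < m) N1^-1 * \1_(A k) w.
have hE : forall w, h w = - K%:R + (Num.Def.trunc ((f w + K%:R) * N1))%:R / N1.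
  move=> w; rewrite /h; congr (_ + _).
  set y := (f w + K%:R) * N1.
  have jm : (Num.Def.trunc y <= m)%N.
    rewrite truncn_le_nat /y /m; apply: (@lt_le_trans _ _ (K * 2 * n.+1)%:R); last by rewrite ler_nat.
    rewrite !natrM -/N1.
    have := fM w; rewrite ler_norml => /andP [_ fw].
    have : 0 < (K%:R - f w) * N1 by rewrite mulr_gt0 // subr_gt0; lra.
    nra.
  rewrite -(sum_lt_nat _ _ jm) natr_sum mulr_suml; apply: eq_bigr => k _.
  rewrite mulrC indicE; congr (_ * _); congr (_%:R); congr nat_of_bool.
  case: (boolP (k < Num.Def.trunc y)%N) => H.
    apply/mem_set; rewrite /A /= in_itv /= andbT.
    move: H; rewrite ltnNge truncn_le_nat -leNgt /y => H.
    by rewrite lerBlDr ler_pdivrMr.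
  apply/memNset; rewrite /A /= in_itv /= andbT.
  move: H; rewrite ltnNge truncn_le_nat negbK /y => H.
  by rewrite lerBlDr ler_pdivrMr // => /(lt_le_trans H); rewrite ltxx.
have fh : forall w, 0 <= f w - h w <= N1^-1.
  move=> w; rewrite hE.
  set y := (f w + K%:R) * N1.
  have y0 : 0 <= y.
    rewrite /y mulr_ge0 ?(ltW N10) //.
    have := fM w; rewrite ler_norml => /andP [fw _]; lra.
  have j1 : (Num.Def.trunc y)%:R <= y by rewrite truncn_le.
  have j2 : y < (Num.Def.trunc y).+1%:R by rewrite -truncn_le_nat.
  have -> : f w - (- K%:R + (Num.Def.trunc y)%:R / N1) = (y - (Num.Def.trunc y)%:R) / N1.
    by rewrite /y; field; rewrite gt_eqF.
  rewrite divr_ge0 ?subr_ge0 ?(ltW N10) //= ler_pdivrMr // mulVf ?gt_eqF //.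
  move: j2; rewrite -natr1; lra.
have mh : measurable_fun setT h.
  apply: measurable_realfun.measurable_funD; first exact: measurable_cst.
  apply: measurable_sum => k.
  apply: measurable_realfun.measurable_funM; first exact: measurable_cst.
  by apply: measurable_realfun.measurable_indic; apply: GM.
have hb : forall w, `|h w| <= M + 1.
  move=> w; have := fM w; have := fh w.
  have : N1^-1 <= 1 by rewrite invr_le1 // ?unitfE ?gt_eqF // ler1n.
  rewrite !ler_norml; set t := N1^-1; set hw := h w; move=> a /andP [b c] /andP [e f']; apply/andP; split; lra.
have igh : P.-integrable setT (fun w => (g w * h w)%:E).
  have := integrableMl measurableT ig mh (bnd_of hb).
  by apply: eq_integrable => // w _ /=; rewrite EFinM.
have iind : forall k, P.-integrable setT (fun w => (g w * \1_(A k) w)%:E).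
  move=> k.
  have hk : forall w, `|\1_(A k) w| <= (1 : R).
    by move=> w; rewrite indicE; case: (w \in A k); rewrite ?normr1 ?normr0.
  have mk : measurable_fun setT (\1_(A k) : T -> R).
    by apply: measurable_realfun.measurable_indic; apply: GM.
  have := integrableMl measurableT ig mk (bnd_of hk).
  by apply: eq_integrable => // w _ /=; rewrite EFinM.
have Igh : (\int[P]_w (g w * h w)%:E = 0)%E.
  rewrite (eq_integral (fun w => ((- K%:R)%:E * (g w)%:E)
      + \sum_(k < m) (N1^-1)%:E * (g w * \1_(A k) w)%:E)%E); last first.
    move=> w _; rewrite /h mulrDr EFinD EFinM mulr_sumr -sumEFin; idtac.
    rewrite muleC; congr (_ + _)%E.
    by apply: eq_bigr => k _; rewrite -EFinM mulrCA.
  rewrite integralD //; last first.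
    by apply: integrable_sum => // k _; apply: integrableZl.
    exact: integrableZl.
  rewrite integralZl // gA // mule0 add0e integral_sum //; last first.
    by move=> k; apply: integrableZl.
  apply: big1 => k _; rewrite integralZl //.
  rewrite (_ : (\int[P]_w (g w * \1_(A k) w)%:E)%E = (\int[P]_(w in A k) (g w)%:E)%E).
    by rewrite gA // mule0.
  rewrite [RHS]integral_mkcond; apply: eq_integral => w _; rewrite patchE indicE.
  by case: (w \in A k); rewrite ?mulr1 ?mulr0.
have pw : forall w, g w * h w - `|g w| * N1^-1 <= g w * f w <= g w * h w + `|g w| * N1^-1.
  move=> w; have /andP [e0 e1] := fh w.
  have : `|g w * (f w - h w)| <= `|g w| * N1^-1.
    by rewrite normrM ler_wpM2l // ger0_norm.
  rewrite ler_norml mulrBr; set a := g w * f w; set b := g w * h w.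
  set c := `|g w| * N1^-1 => /andP [u v]; apply/andP; split; lra.
have iZ : P.-integrable setT (fun w => ((N1^-1)%:E * (`|g w|)%:E)%E).
  exact: integrableZl.
have up : (I <= (N1^-1 * fine J)%:E)%E.
  rewrite (_ : (N1^-1 * fine J)%:E = \int[P]_w ((g w * h w)%:E + (N1^-1)%:E * (`|g w|)%:E))%E; last first.
    by rewrite integralD // Igh add0e integralZl // -/J EFinM fineK.
  apply: le_integral => //; first exact: integrableD.
  by move=> w _; rewrite -EFinM -EFinD lee_fin [N1^-1 * _]mulrC; case/andP: (pw w).
have lo : ((- (N1^-1 * fine J))%:E <= I)%E.
  rewrite (_ : (- (N1^-1 * fine J))%:E = \int[P]_w ((g w * h w)%:E - (N1^-1)%:E * (`|g w|)%:E))%E; last first.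
    by rewrite integralB // Igh add0e integralZl // -/J EFinN EFinM fineK.
  apply: le_integral => //; first exact: integrableB.
  by move=> w _; rewrite -EFinM -EFinB lee_fin [N1^-1 * _]mulrC; case/andP: (pw w).
move: up lo; rewrite -{1 2}(fineK Ifin) !lee_fin => up lo.
by rewrite ler_norml mulrC lo up.
Qed.

Lemma sum_ln_bound (R : realType) (kappa theta : R) (t : nat) :
  0 < kappa -> 0 < theta ->
  \sum_(s < t.+1) (kappa * s%:R + 2 * theta)^-1 <=
  1 / (2 * theta) + 1 / kappa * ln (kappa / (2 * theta) * t%:R + 1).
Proof.
move=> k0 th0.
elim: t => [|t IH].
  by rewrite big_ord_recr big_ord0 /= !mulr0 !add0r ln1 mulr0 addr0 div1r.
rewrite big_ord_recr /=.
set u := kappa / (2 * theta) * t%:R + 1.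
set v := kappa / (2 * theta) * t.+1%:R + 1.
have u0 : 0 < u by rewrite /u ltr_pwDr // mulr_ge0 // divr_ge0 // ltW // mulr_gt0.
have vu : v = u + kappa / (2 * theta) by rewrite /v /u -addn1 natrD; ring.
have v0 : 0 < v by rewrite vu addr_gt0 // divr_gt0 // mulr_gt0.
have key : (kappa * t.+1%:R + 2 * theta)^-1 <= 1 / kappa * (ln v - ln u).
  have e1 : kappa * t.+1%:R + 2 * theta = 2 * theta * v.
    by rewrite /v -addn1 natrD; field; rewrite gt_eqF // mulr_gt0.
  have h1 : -1 < (u - v) / v.
    by rewrite ltr_pdivlMr // mulN1r vu; lra.
  have := le_ln1Dx h1.
  rewrite (_ : 1 + (u - v) / v = u / v); last by field; rewrite gt_eqF.
  rewrite ln_div ?posrE // => H.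
  rewrite e1.
  have e2 : 1 / kappa * ((v - u) / v) = (2 * theta * v)^-1.
    have vu' : v - u = kappa / (2 * theta) by rewrite vu addrAC subrr add0r.
    rewrite vu'; field.
    by rewrite !gt_eqF // ?mulr_gt0.
  rewrite -e2 ler_pM2l ?divr_gt0 ?ltr01 //.
  rewrite -[v - u]opprB mulNr; lra.
apply: le_trans (lerD IH key) _.
by rewrite -addrA -mulrDr addrCA subrr addr0.
Qed.

Lemma recur (R : realType) (kappa theta B : R) (a : nat -> R) :
  0 < kappa -> kappa < theta ->
  (forall t : nat, a t.+1 <= (1 - kappa * (1 / (kappa * t%:R + 2 * theta))) * a t
                         + (1 / (kappa * t%:R + 2 * theta)) ^+ 2 * B) ->
  forall t : nat, (kappa * t%:R + 2 * theta) * a t.+1 <=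
    (2 * theta - kappa) * a 0%N + B * \sum_(s < t.+1) (kappa * s%:R + 2 * theta)^-1.
Proof.
move=> k0 kt H.
have q0 : forall t : nat, 0 < kappa * t%:R + 2 * theta.
  move=> t; apply: ltr_wpDl; first by rewrite mulr_ge0 // ltW.
  lra.
have step : forall t : nat, (kappa * t%:R + 2 * theta) * a t.+1 <=
     (kappa * t%:R + 2 * theta - kappa) * a t + B * (kappa * t%:R + 2 * theta)^-1.
  move=> t; have := H t; rewrite -(ler_pM2l (q0 t)) => H1.
  apply: (le_trans H1); rewrite le_eqVlt; apply/orP; left; apply/eqP.
  field; rewrite gt_eqF //.
elim=> [|t IH].
  have := step 0%N; rewrite big_ord_recr big_ord0 /= !mulr0 !add0r => ->.
  by [].
rewrite big_ord_recr /= mulrDr addrA.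
apply: (le_trans (step t.+1)); rewrite lerD2r.
rewrite (_ : kappa * t.+1%:R + 2 * theta - kappa = kappa * t%:R + 2 * theta) //.
rewrite -addn1 natrD; ring.
Qed.

Lemma enorm_sq (R : realType) n (x : 'rV[R]_n) :
  enorm x ^+ 2 = \sum_(j < n) x ord0 j ^+ 2.
Proof.
rewrite /enorm sqr_sqrtr /einner; last by apply: sumr_ge0 => j _; rewrite -expr2 sqr_ge0.
by apply: eq_bigr => j _; rewrite expr2.
Qed.

Lemma enorm_sq_ge0 (R : realType) n (x : 'rV[R]_n) : 0 <= enorm x ^+ 2.
Proof. by rewrite sqr_ge0. Qed.

Lemma einnerB (R : realType) n (z a b c : 'rV[R]_n) :
  einner z (a - b) + einner z (b - c) = einner z (a - c).
Proof.
rewrite /einner -big_split /=; apply: eq_bigr => j _; rewrite !mxE; ring.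
Qed.

Lemma young1 (R : realType) (rho eta a b : R) : 0 < rho ->
  eta * (a * b) <= rho / 4 * b ^+ 2 + eta ^+ 2 / rho * a ^+ 2.
Proof.
move=> r0.
have e : rho / 4 * b ^+ 2 + eta ^+ 2 / rho * a ^+ 2 - eta * (a * b)
         = (rho / 2 * b - eta * a) ^+ 2 / rho.
  by field; rewrite gt_eqF.
rewrite -subr_ge0 e divr_ge0 ?sqr_ge0 // ltW //.
Qed.

Lemma young_inner (R : realType) n (rho eta : R) (xi dd : 'rV[R]_n) : 0 < rho ->
  eta * einner xi dd <= rho / 4 * enorm dd ^+ 2 + eta ^+ 2 / rho * enorm xi ^+ 2.
Proof.
move=> r0; rewrite !enorm_sq /einner !mulr_sumr -big_split /=.
by apply: ler_sum => j _; apply: young1.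
Qed.

Lemma combine (R : realType) (rho eta theta kappa D1 D0 B S1 S2 Q Z : R) :
  0 < rho -> 0 < eta -> eta * theta <= 1 / 2 -> rho / 2 * Q <= B -> 0 <= Q ->
  eta * S1 <= rho / 4 * Q + eta ^+ 2 / rho * Z ->
  D1 - D0 + B <= eta * (theta * B - kappa * D0) + eta * (S1 + S2) ->
  D1 <= (1 - kappa * eta) * D0 + eta ^+ 2 / rho * Z + eta * S2.
Proof.
move=> r0 e0 et hB hQ hS H.
have B0 : 0 <= B by apply: le_trans hB; rewrite mulr_ge0 // divr_ge0 // ltW.
have h2 : 0 <= (1 / 2 - eta * theta) * B by rewrite mulr_ge0 // subr_ge0.
set W := eta ^+ 2 / rho * Z in hS *.
nra.
Qed.

Lemma coord_le_norm (R : realType) n (x : 'rV[R]_n) j : `|x ord0 j| <= `|x|.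
Proof.
change (`|x| ) with (mx_norm x).
rewrite mx_normrE; exact: (le_bigmax _ (fun ij : 'I_1 * 'I_n => `|x ij.1 ij.2|) (ord0, j)).
Qed.

Lemma compact_coord (R : realType) n (S : set 'rV[R]_n) : compact S ->
  exists M : R, forall x, S x -> forall j, `|x ord0 j| <= M.
Proof.
move=> cS; have [M0 [_ HM]] := compact_bounded cS.
exists (M0 + 1) => x Sx j.
apply: le_trans; first exact: coord_le_norm.
have := HM (M0 + 1); rewrite ltrDl ltr01 => /(_ isT).
by move=> /(_ x Sx).
Qed.

Lemma ae_le_int0 d (T : measurableType d) (R : realType) (mu : measure T R) (f g : T -> R) :
  measurable_fun setT f -> measurable_fun setT g -> (forall w, 0 <= f w) ->
  {ae mu, forall w, f w <= g w} -> (\int[mu]_w (f w)%:E <= \int[mu]_w (g w)%:E)%E.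
Proof.
move=> mf mg f0 H.
have mg' : measurable_fun setT (g \max (fun=> 0)).
  by apply: measurable_realfun.measurable_maxr => //; exact: measurable_cst.
have -> : (\int[mu]_w (g w)%:E = \int[mu]_w ((g \max (fun=> 0)) w)%:E)%E.
  apply: ae_eq_integral => //.
  - by apply/measurable_realfun.measurable_EFinP.
  - by apply/measurable_realfun.measurable_EFinP.
  apply: filterS H => w fg _ /=; congr EFin.
  by apply/esym/max_idPl; apply: le_trans fg.
apply: ae_ge0_le_integral => //.
- by move=> w _; rewrite lee_fin.
- by apply/measurable_realfun.measurable_EFinP.
- by move=> w _ /=; rewrite lee_fin le_max lexx orbT.
- by apply/measurable_realfun.measurable_EFinP.
apply: filterS H => w fg _ /=; rewrite lee_fin le_max fg.
by [].
Qed.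

Lemma coord_sq_le (R : realType) n (x : 'rV[R]_n) j : x ord0 j ^+ 2 <= enorm x ^+ 2.
Proof.
rewrite enorm_sq (bigD1 j) //= lerDl; apply: sumr_ge0 => i _; exact: sqr_ge0.
Qed.
Arguments bregman_lb {R n S f rho x y}.
Arguments coord_sq_le {R n}.
Arguments compact_coord {R n S}.

Theorem lemma5 (R : realType) (d : measure_display) (T : measurableType d)
  (P : probability T R)
  (N : nat) (dim : 'I_N -> nat) (X : forall i, set 'rV[R]_(dim i))
  (psi : forall i, 'rV[R]_(dim i) -> R) (rho theta kappa C : R)
  (p pi0 : forall i, 'rV[R]_(dim i))
  (F : nat -> set (set T))
  (pi xi : nat -> T -> forall i, 'rV[R]_(dim i)) :
  (* the strategy sets *)
  (forall i, X i !=set0) -> (forall i, compact (X i)) ->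
  (forall i, convex_set (X i)) ->
  (* the regularizer *)
  0 < rho ->
  (forall i x, X i x -> differentiable (psi i) x) ->
  (forall i, strongly_convex_on (X i) (psi i) rho) ->
  (* parameters *)
  0 < kappa -> kappa < theta ->
  (* the fixed point p in X *)
  (forall i, X i (p i)) ->
  (* filtration *)
  (forall t, sigma_algebra setT (F t)) ->
  (forall t, F t `<=` measurable) ->
  (forall t, F t `<=` F t.+1) ->
  (* X-valued, adapted process with deterministic initial point *)
  (forall t w i, X i (pi t w i)) ->
  (forall t i j, measurable_wrt (F t) (fun w => pi t w i ord0 j)) ->
  (forall w, pi 0%N w = pi0) ->
  (* the noise *)
  (forall t i j, measurable_fun setT (fun w => xi t w i ord0 j)) ->
  (forall t i j A, F t A ->
     (\int[P]_(w in A) (xi t w i ord0 j)%:E = 0)%E) ->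
  (forall t i A, F t A ->
     (\int[P]_(w in A) ((enorm (xi t w i)) ^+ 2)%:E <= (C ^+ 2)%:E * P A)%E) ->
  (* measurability of the Bregman terms (so that expectations make sense) *)
  (forall t, measurable_fun setT (fun w => bregmanP psi p (pi t w))) ->
  (forall t, measurable_fun setT (fun w => bregmanP psi (pi t.+1 w) (pi t w))) ->
  (* the one-step inequality, almost surely *)
  (forall t : nat,
     {ae P, forall w,
       bregmanP psi p (pi t.+1 w) - bregmanP psi p (pi t w)
         + bregmanP psi (pi t.+1 w) (pi t w)
       <= 1 / (kappa * t%:R + 2 * theta) *
            (theta * bregmanP psi (pi t.+1 w) (pi t w)
             - kappa * bregmanP psi p (pi t w))
          + 1 / (kappa * t%:R + 2 * theta) *
            \sum_(i < N) einner (xi t w i) (pi t.+1 w i - p i)}) ->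
  forall t : nat,
    (\int[P]_w (bregmanP psi p (pi t.+1 w))%:E <=
      ((2 * theta - kappa) / (kappa * t%:R + 2 * theta) * bregmanP psi p pi0
       + N%:R * C ^+ 2 / (rho * (kappa * t%:R + 2 * theta)) *
         (1 / kappa * ln (kappa / (2 * theta) * t%:R + 1) + 1 / (2 * theta)))%:E)%E.
Proof.
move=> Xne Xc Xcv r0 dpsi scv k0 kt Xp sF Fm Fmon Xpi wpi pi0E mxi xi0 xi2 mD mB Hae t.
have th0 : 0 < theta by apply: lt_trans kt.
have q0 : forall s : nat, 0 < kappa * s%:R + 2 * theta.
  move=> s; apply: ltr_wpDl; first by rewrite mulr_ge0 // ltW.
  lra.
pose eta (s : nat) := 1 / (kappa * s%:R + 2 * theta).
have eta0 : forall s, 0 < eta s by move=> s; rewrite divr_gt0.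
pose Dt s w := bregmanP psi p (pi s w).
pose Z s w := \sum_(i < N) enorm (xi s w i) ^+ 2.
pose S2 s w := \sum_(i < N) \sum_(j < dim i) xi s w i ord0 j * (pi s w i ord0 j - p i ord0 j).
have S2sum : forall s w, \sum_(i < N) einner (xi s w i) (pi s w i - p i) = S2 s w.
  by move=> s w; apply: eq_bigr => i _; apply: eq_bigr => j _; rewrite !mxE.
have Dt0 : forall s w, 0 <= Dt s w.
  move=> s w; apply: sumr_ge0 => i _.
  apply: (le_trans _ (bregman_lb (scv i) (Xp i) (Xpi s w i) (dpsi i _ (Xpi s w i)))).
  by rewrite mulr_ge0 ?sqr_ge0 // divr_ge0 // ltW.
have pw : forall s, {ae P, forall w, Dt s.+1 w <=
    (1 - kappa * eta s) * Dt s w + eta s ^+ 2 / rho * Z s w + eta s * S2 s w}.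
  move=> s; apply: filterS (Hae s) => w H.
  rewrite -S2sum.
  apply: (@combine R rho (eta s) theta kappa _ _ (bregmanP psi (pi s.+1 w) (pi s w))
    (\sum_(i < N) einner (xi s w i) (pi s.+1 w i - pi s w i)) _
    (\sum_(i < N) enorm (pi s.+1 w i - pi s w i) ^+ 2)) => //.
  - rewrite /eta mulrC mul1r ler_pdivrMr //.
    have : 0 <= kappa * s%:R by rewrite mulr_ge0 // ltW.
    lra.
  - rewrite /bregmanP mulr_sumr; apply: ler_sum => i _.
    exact: (bregman_lb (scv i) (Xpi s.+1 w i) (Xpi s w i) (dpsi i _ (Xpi s w i))).
  - by apply: sumr_ge0 => i _; exact: sqr_ge0.
  - rewrite /Z !mulr_sumr -big_split /=; apply: ler_sum => i _.
    exact: young_inner.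
  - have eS : \sum_(i < N) einner (xi s w i) (pi s.+1 w i - p i) =
      \sum_(i < N) einner (xi s w i) (pi s.+1 w i - pi s w i) +
      \sum_(i < N) einner (xi s w i) (pi s w i - p i).
      by rewrite -big_split; apply: eq_bigr => i _ /=; rewrite einnerB.
    by rewrite -eS.
have Fs : forall s, F s setT.
  by move=> s; case: (sF s) => F0 FC _; have := FC set0 F0; rewrite setD0.
have mcoord : forall s i j, measurable_fun setT (fun w => pi s w i ord0 j).
  by move=> s i j _ B mB0; rewrite setTI; exact: Fm _ (wpi s i j B mB0).
have menorm : forall s i, measurable_fun setT (fun w => enorm (xi s w i) ^+ 2).
  move=> s i.
  have -> : (fun w => enorm (xi s w i) ^+ 2) = (fun w => \sum_(j < dim i) xi s w i ord0 j ^+ 2).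
    by apply: boolp.funext => w; rewrite enorm_sq.
  by apply: measurable_sum => j; apply: measurable_realfun.measurable_funX.
have mZ : forall s, measurable_fun setT (Z s).
  by move=> s; apply: measurable_sum => i; exact: menorm.
have mS2 : forall s, measurable_fun setT (S2 s).
  move=> s; apply: measurable_sum => i; apply: measurable_sum => j.
  apply: measurable_realfun.measurable_funM => //.
  apply: measurable_realfun.measurable_funB => //; exact: measurable_cst.
have int_en : forall s i, (\int[P]_w (enorm (xi s w i) ^+ 2)%:E <= (C ^+ 2)%:E)%E.
  by move=> s i; have := xi2 s i _ (Fs s); rewrite probability_setT mule1.
have ien : forall s i, P.-integrable setT (fun w => (enorm (xi s w i) ^+ 2)%:E).
  move=> s i; apply/integrableP; split.
    by apply/measurable_realfun.measurable_EFinP; exact: menorm.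
  rewrite (eq_integral (fun w => (enorm (xi s w i) ^+ 2)%:E)); last first.
    by move=> w _; rewrite gee0_abs // lee_fin sqr_ge0.
  by apply: le_lt_trans (int_en s i) _; exact: ltry.
have iZ : forall s, P.-integrable setT (fun w => (Z s w)%:E).
  move=> s; have := @integrable_sum _ _ _ P setT measurableT 'I_N (index_enum 'I_N) predT
    (fun i w => (enorm (xi s w i) ^+ 2)%:E) (fun i _ => ien s i).
  by apply: eq_integrable => // w _; rewrite sumEFin.
have intZ : forall s, (\int[P]_w (Z s w)%:E <= (N%:R * C ^+ 2)%:E)%E.
  move=> s; rewrite (eq_integral (fun w => \sum_(i < N) (enorm (xi s w i) ^+ 2)%:E)); last first.
    by move=> w _; rewrite sumEFin.
  rewrite integral_sum //.
  apply: le_trans; first by apply: lee_sum => i _; exact: int_en s i.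
  by rewrite sumEFin sumr_const card_ord mulr_natl.
have ixi : forall s i j, P.-integrable setT (EFin \o (fun w => xi s w i ord0 j)).
  move=> s i j.
  apply: (le_integrable measurableT _ _ (integrableD measurableT
    (@finite_measure_integrable_cst _ _ _ P setT 1 measurableT) (ien s i))).
    by apply/measurable_realfun.measurable_EFinP.
  move=> w _ /=; rewrite lee_fin.
  have h1 := coord_sq_le (xi s w i) j.
  set x := xi s w i ord0 j in h1 *; set e := enorm (xi s w i) ^+ 2 in h1 *.
  have e0 : 0 <= e by rewrite /e sqr_ge0.
  rewrite [X in _ <= X]ger0_norm; last lra.
  have : `|x| <= 1 + x ^+ 2.
    case: (lerP 0 x) => x0; [rewrite ger0_norm // | rewrite ltr0_norm //]; nra.
  lra.
have bnd : forall s i j, exists M, forall w, `|pi s w i ord0 j - p i ord0 j| <= M.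
  move=> s i j; have [M HM] := compact_coord (Xc i); exists (M + M) => w.
  by apply: le_trans (ler_normB _ _) _; rewrite lerD // HM.
have iS2t : forall s i j, P.-integrable setT
    (fun w => (xi s w i ord0 j * (pi s w i ord0 j - p i ord0 j))%:E).
  move=> s i j; have [M HM] := bnd s i j.
  have mf : measurable_fun setT (fun w => pi s w i ord0 j - p i ord0 j).
    by apply: measurable_realfun.measurable_funB => //; exact: measurable_cst.
  have := integrableMl measurableT (ixi s i j) mf (bnd_of HM).
  by apply: eq_integrable => // w _ /=; rewrite EFinM.
have iS2 : forall s, P.-integrable setT (fun w => (S2 s w)%:E).
  move=> s.
  have H2 : forall i : 'I_N, predT i -> P.-integrable setT
      (fun w => \sum_(j < dim i) (xi s w i ord0 j * (pi s w i ord0 j - p i ord0 j))%:E).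
    move=> i _.
    exact: (@integrable_sum _ _ _ P setT measurableT 'I_(dim i) (index_enum 'I_(dim i)) predT
      _ (fun j _ => iS2t s i j)).
  have := @integrable_sum _ _ _ P setT measurableT 'I_N (index_enum 'I_N) predT _ H2.
  apply: eq_integrable => // w _; rewrite /S2 -sumEFin; apply: eq_bigr => i _.
  by rewrite sumEFin.
have intS2 : forall s, (\int[P]_w (S2 s w)%:E = 0)%E.
  move=> s.
  rewrite (eq_integral (fun w => \sum_(i < N) \sum_(j < dim i)
       (xi s w i ord0 j * (pi s w i ord0 j - p i ord0 j))%:E)); last first.
    move=> w _; rewrite /S2 -sumEFin; apply: eq_bigr => i _.
    by rewrite sumEFin.
  rewrite integral_sum //; last first.
    move=> i.
    exact: (@integrable_sum _ _ _ P setT measurableT 'I_(dim i) (index_enum 'I_(dim i)) predT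
      _ (fun j _ => iS2t s i j)).
  apply: big1 => i _.
  rewrite integral_sum //.
  apply: big1 => j _.
  have [M HM] := bnd s i j.
  have wf : measurable_wrt (F s) (fun w => pi s w i ord0 j - p i ord0 j).
    move=> B mB0.
    have mB' : measurable ((fun y : R => y - p i ord0 j) @^-1` B).
      have : measurable_fun setT (fun y : R => y - p i ord0 j).
        by apply: measurable_realfun.measurable_funB => //; exact: measurable_cst.
      by move=> /(_ measurableT B mB0); rewrite setTI.
    exact: wpi s i j _ mB'.
  exact: (@zero_mean _ _ _ P (F s) (fun w => xi s w i ord0 j) _ M (Fm s) (Fs s)
    (mxi s i j) (ixi s i j) (xi0 s i j) wf HM).
have istep : forall s, P.-integrable setT (fun w => (Dt s w)%:E) ->
   P.-integrable setT (fun w => (Dt s.+1 w)%:E) /\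
   (\int[P]_w (Dt s.+1 w)%:E <= ((1 - kappa * eta s) * fine (\int[P]_w (Dt s w)%:E)
       + eta s ^+ 2 / rho * (N%:R * C ^+ 2))%:E)%E.
  move=> s iD.
  pose g w := (1 - kappa * eta s) * Dt s w + eta s ^+ 2 / rho * Z s w + eta s * S2 s w.
  have mg : measurable_fun setT g.
    apply: measurable_realfun.measurable_funD; first apply: measurable_realfun.measurable_funD.
    - by apply: measurable_realfun.measurable_funM; [exact: measurable_cst | exact: mD].
    - by apply: measurable_realfun.measurable_funM => //; exact: measurable_cst.
    - by apply: measurable_realfun.measurable_funM => //; exact: measurable_cst.
  have i1 := integrableZl measurableT (1 - kappa * eta s) iD.
  have i2 := integrableZl measurableT (eta s ^+ 2 / rho) (iZ s).
  have i3 := integrableZl measurableT (eta s) (iS2 s).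
  have Ig : (\int[P]_w (g w)%:E = (1 - kappa * eta s)%:E * \int[P]_w (Dt s w)%:E
                 + (eta s ^+ 2 / rho)%:E * \int[P]_w (Z s w)%:E)%E.
    rewrite (eq_integral (fun w => ((1 - kappa * eta s)%:E * (Dt s w)%:E
          + (eta s ^+ 2 / rho)%:E * (Z s w)%:E) + (eta s)%:E * (S2 s w)%:E)%E); last first.
      by move=> w _; rewrite /g !EFinD !EFinM.
    rewrite integralD //; last exact: integrableD.
    rewrite integralD // !integralZl // intS2 mule0 adde0.
    by [].
  have le1 : (\int[P]_w (Dt s.+1 w)%:E <= \int[P]_w (g w)%:E)%E.
    exact: (@ae_le_int0 _ _ _ P _ _ (mD s.+1) mg (Dt0 s.+1) (pw s)).
  have Dfin := integrable_fin_num measurableT iD.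
  have Zfin := integrable_fin_num measurableT (iZ s).
  have le2 : (\int[P]_w (g w)%:E <= ((1 - kappa * eta s) * fine (\int[P]_w (Dt s w)%:E)
       + eta s ^+ 2 / rho * (N%:R * C ^+ 2))%:E)%E.
    rewrite Ig -[in X in (X <= _)%E](fineK Dfin) -[in X in (X <= _)%E](fineK Zfin).
    rewrite -!EFinM -EFinD lee_fin lerD2l ler_wpM2l //.
      by rewrite divr_ge0 ?sqr_ge0 // ltW.
    by have := intZ s; rewrite -(fineK Zfin) lee_fin.
  split; last exact: le_trans le1 le2.
  apply/integrableP; split; first by apply/measurable_realfun.measurable_EFinP; exact: mD.
  rewrite (eq_integral (fun w => (Dt s.+1 w)%:E)); last first.
    by move=> w _; rewrite gee0_abs // lee_fin.
  exact: le_lt_trans (le_trans le1 le2) (ltry _).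
have iDall : forall s, P.-integrable setT (fun w => (Dt s w)%:E).
  elim=> [|s IH]; last by case: (istep s IH).
  have := @finite_measure_integrable_cst _ _ _ P setT (bregmanP psi p pi0) measurableT.
  by apply: eq_integrable => // w _; rewrite /Dt pi0E.
pose a s := fine (\int[P]_w (Dt s w)%:E).
have aE : forall s, (\int[P]_w (Dt s w)%:E = (a s)%:E)%E.
  by move=> s; rewrite fineK // integrable_fin_num.
have a0 : a 0%N = bregmanP psi p pi0.
  rewrite /a (eq_integral (fun w => (bregmanP psi p pi0)%:E)); last first.
    by move=> w _; rewrite /Dt pi0E.
  rewrite integral_cst //; transitivity (fine ((bregmanP psi p pi0)%:E * 1%E)); last by rewrite mule1.
  by congr (fine (_ * _)); exact: probability_setT.
have rec : forall s : nat, a s.+1 <= (1 - kappa * (1 / (kappa * s%:R + 2 * theta))) * a s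
      + (1 / (kappa * s%:R + 2 * theta)) ^+ 2 * (N%:R * C ^+ 2 / rho).
  move=> s; have [_ H] := istep s (iDall s); move: H; rewrite aE lee_fin => H.
  apply: (le_trans H); rewrite /eta le_eqVlt; apply/orP; left; apply/eqP.
  by rewrite /a; congr (_ + _); ring.
have hr := @recur R kappa theta _ a k0 kt rec t.
have hs := @sum_ln_bound R kappa theta t k0 th0.
have := aE t.+1; rewrite /Dt => ->; rewrite lee_fin -a0.
set L := 1 / (2 * theta) + 1 / kappa * ln (kappa / (2 * theta) * t%:R + 1) in hs *.
have B0 : 0 <= N%:R * C ^+ 2 / rho by apply: divr_ge0; [rewrite mulr_ge0 ?sqr_ge0 ?ler0n | exact: ltW].
have h3 : (kappa * t%:R + 2 * theta) * a t.+1 <= (2 * theta - kappa) * a 0%N + N%:R * C ^+ 2 / rho * L.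
  by apply: le_trans hr _; rewrite lerD2l ler_wpM2l.
rewrite -(ler_pM2l (q0 t)); apply: le_trans h3 _.
rewrite le_eqVlt; apply/orP; left; apply/eqP; rewrite /L.
field.
by rewrite !gt_eqF.
Qed.
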